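(* Let $A$ be a dilation, $X$ a ball quasi-Banach function space, $s\in(0,\infty)$, and $d\mu$ a Borel measure on $\mathbb R^n\times\mathbb Z$. Define $$\widetilde{\|d\mu\|}^A_X:=\sup\left\|\left\{\sum_{i\in\mathbb N}\left[\frac{\lambda_i}{\|\mathbf 1_{B^{(i)}}\|_X}\right]^s\mathbf 1_{B^{(i)}}\right\}^{1/s}\right\|_X^{-1}\sum_{j\in\mathbb N}\frac{\lambda_j|B^{(j)}|^{1/2}}{\|\mathbf 1_{B^{(j)}}\|_X}\left[\int_{\widehat{B^{(j)}}}|d\mu(x,k)|\right]^{1/2},$$ the supremum over all $\{B^{(j)}\}_{j\in\mathbb N}\subset\mathcal B$ and $\{\lambda_j\}_{j\in\mathbb N}\subset[0,\infty)$ with $\left\|\left\{\sum_{i\in\mathbb N}\left[\frac{\lambda_i}{\|\mathbf 1_{B^{(i)}}\|_X}\right]^s\mathbf 1_{B^{(i)}}\right\}^{1/s}\right\|_X\in(0,\infty)$. Then $\widetilde{\|d\mu\|}^A_X=\|d\mu\|^A_X$.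
   Context: A real $n\times n$ matrix $A$ is a dilation if all its eigenvalues have modulus $>1$; $b:=|\det A|$. Fix an open ellipsoid $\Delta$ symmetric about $0$ with $|\Delta|=1$ and $r>1$ with $\Delta\subset r\Delta\subset A\Delta$; $B_k:=A^k\Delta$, $\mathcal B:=\{x+B_k:x\in\mathbb R^n,k\in\mathbb Z\}$. Ball quasi-Banach function space: a quasi-normed space $X$ of measurable functions with quasi-norm defined on all measurable functions such that (i) $\|f\|_X=0\Rightarrow f=0$ a.e.; (ii) $|g|\le|f|$ a.e. $\Rightarrow\|g\|_X\le\|f\|_X$; (iii) $0\le f_m\uparrow f$ a.e. $\Rightarrow\|f_m\|_X\uparrow\|f\|_X$; (iv) $\mathbf 1_B\in X$ for $B\in\mathcal B$. For $B\in\mathcal B$, the tent over $B$ is $\widehat B:=\{(y,k)\in\mathbb R^n\times\mathbb Z:y+B_k\subset B\}$. For a Borel measure $d\mu$ on $\mathbb R^n\times\mathbb Z$ and $s\in(0,\infty)$, $$\|d\mu\|^A_X:=\sup\left\|\left\{\sum_{i=1}^m\left[\frac{\lambda_i}{\|\mathbf 1_{B^{(i)}}\|_X}\right]^s\mathbf 1_{B^{(i)}}\right\}^{1/s}\right\|_X^{-1}\sum_{j=1}^m\frac{\lambda_j|B^{(j)}|^{1/2}}{\|\mathbf 1_{B^{(j)}}\|_X}\left[\int_{\widehat{B^{(j)}}}|d\mu(x,k)|\right]^{1/2},$$ the supremum over $m\in\mathbb N$, $\{B^{(j)}\}_{j=1}^m\subset\mathcal B$ and $\{\lambda_j\}_{j=1}^m\subset[0,\infty)$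 with $\sum_j\lambda_j\ne0$; $d\mu$ is an anisotropic $X$–Carleson measure if this is finite. *)

(* Defs.v *)
From HB Require Import structures.
From mathcomp Require Import all_boot all_order all_algebra.
From mathcomp Require Import all_classical all_reals all_analysis.
From mathcomp Require Import complex.
Import Order.TTheory GRing.Theory Num.Theory.
Import numFieldTopology.Exports numFieldNormedType.Exports.

Set Implicit Arguments.
Unset Strict Implicit.
Unset Printing Implicit Defensive.

Local Open Scope classical_set_scope.
Local Open Scope ring_scope.

Section Anisotropic.
Variables (R : realType) (n : nat).
Local Notation V := 'cV[R]_n.

Definition obox (a b : V) : set V :=
  [set x | forall i : 'I_n, a i 0 < x i 0 < b i 0].

Definition obox_vol (a b : V) : R := \prod_(i < n) Num.max (b i 0 - a i 0) 0.

Definition leb_outer (E : set V) : \bar R :=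
  ereal_inf [set z : \bar R | exists a b : nat -> V,
     E `<=` \bigcup_k obox (a k) (b k) /\
     z = (\sum_(k <oo) (obox_vol (a k) (b k))%:E)%E].

Definition leb_measurable (E : set V) : Prop :=
  forall T : set V, leb_outer T = (leb_outer (T `&` E) + leb_outer (T `&` ~` E))%E.

Definition leb_meas_fun (f : V -> \bar R) : Prop :=
  forall a : R, leb_measurable [set x | (f x < a%:E)%E].

Definition lae (P : V -> Prop) : Prop := leb_outer [set x | ~ P x] = 0%E.

Definition is_dilation (A : 'M[R]_n) : Prop :=
  forall z : R[i], root (map_poly (real_complex R) (char_poly A)) z -> 1 < `|z|.

Definition centered_ellipsoid (D : set V) : Prop :=
  exists P : 'M[R]_n, P \in unitmx /\
    D = [set x | \sum_(i < n) ((P *m x) i 0) ^+ 2 < 1].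

Definition scale_set (r : R) (D : set V) : set V := [set r *: x | x in D].

Definition mpow (A : 'M[R]_n) (k : int) : 'M[R]_n :=
  match k with
  | Posz m => iter m (mulmx A) 1%:M
  | Negz m => iter m.+1 (mulmx (invmx A)) 1%:M
  end.

Definition lin_image (M : 'M[R]_n) (D : set V) : set V := [set M *m y | y in D].

Definition Bk (A : 'M[R]_n) (D : set V) (k : int) : set V := lin_image (mpow A k) D.

Definition aball (A : 'M[R]_n) (D : set V) (x : V) (k : int) : set V :=
  [set x + y | y in Bk A D k].

Definition tent (A : 'M[R]_n) (D : set V) (B : set V) : set (V * int) :=
  [set p | aball A D p.1 p.2 `<=` B].

Definition nnmeas (f : V -> \bar R) : Prop :=
  leb_meas_fun f /\ forall x, (0 <= f x)%E.

Definition indE (B : set V) : V -> \bar R := fun x => (\1_B x)%:E.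

(* The quasi-norm is given through its values on nonnegative measurable
   functions (by (ii), ||f||_X = || |f| ||_X).  Axioms: quasi-norm
   (nonnegativity, positive homogeneity, quasi-triangle inequality) and
   (i)-(iv) of the definition. *)
Definition ball_qBfs (A : 'M[R]_n) (D : set V) (N : (V -> \bar R) -> \bar R) : Prop :=
  [/\ forall f, nnmeas f -> (0 <= N f)%E,
      forall f (c : R), nnmeas f -> 0 <= c -> N (fun x => c%:E * f x)%E = (c%:E * N f)%E,
      exists K : R, 1 <= K /\ forall f g, nnmeas f -> nnmeas g ->
          (N (fun x => f x + g x) <= K%:E * (N f + N g))%E,
      forall f, nnmeas f -> N f = 0%E -> lae (fun x => f x = 0%E)
    & [/\ forall f g, nnmeas f -> nnmeas g -> lae (fun x => (g x <= f x)%E) -> (N g <= N f)%E,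
          forall (F : nat -> V -> \bar R) f, (forall m, nnmeas (F m)) -> nnmeas f ->
            lae (fun x => forall m, (F m x <= F m.+1 x)%E) ->
            lae (fun x => (fun m => F m x) @ \oo --> f x) ->
            (fun m => N (F m)) @ \oo --> N f
        & forall (x : V) (k : int), (N (indE (aball A D x k)) < +oo)%E]].

Definition borelVZ : set (set (V * int)) :=
  <<s [set S | exists (U : set V) (k : int), open U /\ S = U `*` [set k]] >>.

(* a (nonnegative) Borel measure; its values outside Borel sets are irrelevant *)
Definition borel_measure (mu : set (V * int) -> \bar R) : Prop :=
  [/\ mu set0 = 0%E,
      forall S, borelVZ S -> (0 <= mu S)%E
    & forall F : nat -> set (V * int), (forall i, borelVZ (F i)) ->
        trivIset setT F ->
        (fun m => \sum_(i < m) mu (F i))%E @ \oo --> mu (\bigcup_i F i)].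

Section Carleson.
Variables (A : 'M[R]_n) (D : set V) (N : (V -> \bar R) -> \bar R) (s : R)
          (mu : set (V * int) -> \bar R).

Let bl (c : nat -> V) (k : nat -> int) (j : nat) : set V := aball A D (c j) (k j).

(* ||1_{B^(j)}||_X (a positive real number under the axioms) *)
Let nB (c : nat -> V) (k : nat -> int) (j : nat) : R := fine (N (indE (bl c k j))).

Let coef (c : nat -> V) (k : nat -> int) (lam : nat -> R) (j : nat) : R :=
  (lam j / nB c k j) `^ s.

Let term (c : nat -> V) (k : nat -> int) (lam : nat -> R) (j : nat) : \bar R :=
  ((lam j / nB c k j)%:E * (leb_outer (bl c k j) `^ 2^-1)
    * (mu (tent A D (bl c k j)) `^ 2^-1))%E.

Let Ffin (m : nat) (c : nat -> V) (k : nat -> int) (lam : nat -> R) : V -> \bar R :=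
  fun x => ((\sum_(i < m) coef c k lam i * \1_(bl c k i) x) `^ s^-1)%:E.

Let Finf (c : nat -> V) (k : nat -> int) (lam : nat -> R) : V -> \bar R :=
  fun x => ((\sum_(i <oo) (coef c k lam i * \1_(bl c k i) x)%:E) `^ s^-1)%E.

Definition carleson_norm : \bar R :=
  ereal_sup [set v : \bar R | exists (m : nat) (c : nat -> V) (k : nat -> int)
      (lam : nat -> R),
      [/\ forall j, 0 <= lam j,
          \sum_(j < m) lam j != 0
        & v = ((\sum_(j < m) term c k lam j)
               * ((fine (N (Ffin m c k lam)))^-1)%:E)%E]].

Definition carleson_norm_tilde : \bar R :=
  ereal_sup [set v : \bar R | exists (c : nat -> V) (k : nat -> int)
      (lam : nat -> R),
      [/\ forall j, 0 <= lam j,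
          (0 < N (Finf c k lam) < +oo)%E
        & v = ((\sum_(j <oo) term c k lam j)
               * ((fine (N (Finf c k lam)))^-1)%:E)%E]].

End Carleson.
End Anisotropic.

(* Main.v *)
Require Import Defs.
From HB Require Import structures.
From mathcomp Require Import all_boot all_order all_algebra.
From mathcomp Require Import all_classical all_reals all_analysis.
From mathcomp Require Import complex.
From mathcomp Require Import lra.
Import Order.TTheory GRing.Theory Num.Theory.
Import numFieldTopology.Exports numFieldNormedType.Exports.
Local Open Scope classical_set_scope.
Local Open Scope ring_scope.

Set Implicit Arguments.
Unset Strict Implicit.
Unset Printing Implicit Defensive.


Section Leb.
Variables (R : realType) (n : nat).
Local Notation V := 'cV[R]_n.
Local Notation leb := (@leb_outer R n).

Lemma obox_vol_ge0 (a b : V) : 0 <= obox_vol a b.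
Proof. by apply: prodr_ge0 => i _; rewrite le_max lexx orbT. Qed.

Local Open Scope ereal_scope.

Lemma leb_lb (E : set V) (a b : nat -> V) :
  E `<=` \bigcup_k obox (a k) (b k) ->
  leb E <= \sum_(k <oo) (obox_vol (a k) (b k))%:E.
Proof. by move=> EC; apply: ereal_inf_lbound; exists a, b. Qed.

Lemma leb_ge0 E : 0 <= leb E.
Proof.
apply: le_ereal_inf_tmp => _ [a [b [_ ->]]].
by apply: nneseries_ge0 => k _; rewrite lee_fin obox_vol_ge0.
Qed.

Lemma leb_le (E F : set V) : E `<=` F -> leb E <= leb F.
Proof.
move=> EF; apply: ereal_inf_le_tmp => _ [a [b [Fc ->]]].
by exists a, b; split => //; apply: subset_trans Fc.
Qed.

Lemma leb_approx (E : set V) (e : R) : (0 < e)%R -> leb E \is a fin_num ->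
  exists a b : nat -> V, E `<=` \bigcup_k obox (a k) (b k) /\
    \sum_(k <oo) (obox_vol (a k) (b k))%:E <= leb E + e%:E.
Proof.
move=> e0 fE; have [_ [a [b [Ec ->]]] h] := lb_ereal_inf_adherent e0 fE.
by exists a, b; split => //; apply: ltW.
Qed.


Lemma leb_sigma_subadditive (F : (set V)^nat) :
  leb (\bigcup_k F k) <= \sum_(i <oo) leb (F i).
Proof.
have [[i ioo]|] := pselect (exists i, leb (F i) = +oo).
  rewrite (eseries_pinfty _ _ ioo) ?leey// => k _.
  by rewrite -ltNye (lt_le_trans _ (leb_ge0 _)).
rewrite -forallNE => Foo.
suff add2e (e : {posnum R}) :
    leb (\bigcup_k F k) <= \sum_(i <oo) leb (F i) + e%:num%:E.
  by apply/lee_addgt0Pr => _/posnumP[].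
rewrite (le_trans _ (epsilon_trick _ _ _))//; last by move=> k; exact: leb_ge0.
pose P k (G : nat -> V * V) := F k `<=` \bigcup_j obox (G j).1 (G j).2 /\
  \sum_(j <oo) (obox_vol (G j).1 (G j).2)%:E <= leb (F k) + (e%:num / (2 ^ k.+1)%:R)%:E.
have [G PG] : {G : (nat -> V * V)^nat & forall k, P k (G k)}.
  apply: (@choice _ _ P) => k.
  have fk : leb (F k) \is a fin_num.
    by rewrite ge0_fin_numE ?leb_ge0 // ltey; apply/eqP/Foo.
  have ek : (0 < e%:num / (2 ^ k.+1)%:R)%R by [].
  have [a [b [c1 c2]]] := leb_approx ek fk.
  by exists (fun j => (a j, b j)); split.
pose g (p : nat * nat) := (obox_vol (G p.1 p.2).1 (G p.1 p.2).2)%:E.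
have g0 p : 0 <= g p by rewrite lee_fin obox_vol_ge0.
apply: (@le_trans _ _ (\esum_(i in setT) g i)).
  have /card_esym/ppcard_eqP[f] := card_nat2.
  apply: (le_trans (leb_lb (a := fun k => (G (f k).1 (f k).2).1)
                           (b := fun k => (G (f k).1 (f k).2).2) _)).
    move=> t [i _] /(PG i).1 [j _ ?]; exists (f^-1%FUN (i, j)) => //=.
    by rewrite invK ?inE.
  rewrite -(esum_pred_image g _ xpredT) ?[fun=> _]set_true//.
  by rewrite image_eq.
rewrite (_ : esum _ _ = \sum_(i <oo) \sum_(j <oo ) g (i, j)); last first.
  pose J : nat -> set (nat * nat) := fun i => [set (i, j) | j in setT].
  rewrite (_ : setT = \bigcup_k J k); last first.
    by rewrite predeqE => -[a b]; split => // _; exists a => //; exists b.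
  rewrite esum_bigcupT /=; last 2 first.
    - apply/trivIsetP => i j _ _ ij.
      rewrite predeqE => -[k m] /=; split => //= -[] [_] _ [<-{k} _].
      by move=> [m' _] [] /esym/eqP; rewrite (negbTE ij).
    - by move=> p; exact: g0.
  rewrite -(image_id [set: nat]) -fun_true esum_pred_image//; last first.
    by move=> k _; exact: esum_ge0.
  apply: eq_eseriesr => /= j _.
  rewrite -(esum_pred_image g (pair j) predT)//=; last first.
    by move=> ? ? _ _; exact: (@can_inj _ _ _ snd).
  by congr esum; rewrite predeqE => -[a b]; split; move=> [i _ <-]; exists i.
apply: lee_lim.
- apply: is_cvg_nneseries => k *.
  by apply: nneseries_ge0 => m *; exact: (g0 (k, m)).
- by apply: is_cvg_nneseries => k *; apply: adde_ge0 => //; exact: leb_ge0.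
- by near=> k; apply: lee_sum => i _; exact: (PG i).2.
Unshelve. all: by end_near. Qed.

Lemma leb0 : (0 < n)%N -> leb set0 = 0.
Proof.
move=> n0; apply/eqP; rewrite eq_le leb_ge0 andbT.
have h := leb_lb (a := fun=> 0%R) (b := fun=> 0%R) (sub0set _).
rewrite eseries0 // in h => k _ _; rewrite /obox_vol.
case: (n) n0 => // m _; rewrite big_ord_recl subrr maxxx mul0r //.
Qed.

End Leb.


Section Half.
Variables (R : realType) (n : nat).
Local Notation V := 'cV[R]_n.
Local Notation leb := (@leb_outer R n).

Definition setc (x : V) (i : 'I_n) (t : R) : V :=
  \matrix_(j, l) (if j == i then t else x j l).

Definition wvol (a b : V) (i : 'I_n) : R :=
  \prod_(j < n | j != i) Num.max (b j 0 - a j 0) 0.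

Lemma wvol_ge0 a b i : 0 <= wvol a b i.
Proof. by apply: prodr_ge0 => j _; rewrite le_max lexx orbT. Qed.

Lemma vol_split (a b : V) i :
  obox_vol a b = Num.max (b i 0 - a i 0) 0 * wvol a b i.
Proof. by rewrite /obox_vol (bigD1 i). Qed.

Lemma wvol_setcl a b i t : wvol (setc a i t) b i = wvol a b i.
Proof.
by apply: eq_bigr => j ji; rewrite mxE (negbTE ji).
Qed.

Lemma wvol_setcr a b i t : wvol a (setc b i t) i = wvol a b i.
Proof.
by apply: eq_bigr => j ji; rewrite mxE (negbTE ji).
Qed.

Lemma setcE (x : V) i t : setc x i t i 0 = t.
Proof. by rewrite mxE eqxx. Qed.

Lemma obox_setc (a b : V) i t (x : V) : obox a b x ->
  a i 0 < x i 0 < t -> obox a (setc b i t) x.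
Proof.
move=> ab xi j; rewrite [in X in _ && X]mxE; case: eqP => [->//|_].
exact: ab.
Qed.

Lemma obox_setcl (a b : V) i t (x : V) : obox a b x ->
  t < x i 0 < b i 0 -> obox (setc a i t) b x.
Proof.
move=> ab xi j; rewrite mxE; case: eqP => [->//|_].
exact: ab.
Qed.

Lemma max_split (p q a d : R) : 0 < d ->
  Num.max (Num.min q a - p) 0 + Num.max (q - Num.max p (a - d)) 0 <=
  Num.max (q - p) 0 + d.
Proof.
move=> d0.
rewrite /Num.max /Num.min.
repeat case: ifPn => /=.
all: rewrite ?ltNge ?negbK => *; lra.
Qed.


Local Open Scope ereal_scope.

Lemma half_carath (i : 'I_n) (a : R) (X : set V) :
  leb (X `&` [set x | (x i 0 < a)%R]) + leb (X `&` ~` [set x | (x i 0 < a)%R])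
  <= leb X.
Proof.
have [->|Xoo] := eqVneq (leb X) +oo; first by rewrite leey.
have fX : leb X \is a fin_num by rewrite ge0_fin_numE ?leb_ge0 // ltey.
apply/lee_addgt0Pr => e e0.
have e20 : (0 < e / 2)%R by rewrite divr_gt0.
have [al [be [cov hs]]] := leb_approx e20 fX.
pose w k := wvol (al k) (be k) i.
pose d k := (((e / 2) / (2 ^ k.+1)%:R) / (w k + 1))%R.
have w0 k : (0 <= w k)%R by exact: wvol_ge0.
have d0 k : (0 < d k)%R.
  by rewrite /d divr_gt0 // ?divr_gt0 // ltr_wpDl.
pose be' k := setc (be k) i (Num.min (be k i 0) a)%R.
pose al' k := setc (al k) i (Num.max (al k i 0) (a - d k))%R.
have c1 : X `&` [set x | (x i 0 < a)%R] `<=` \bigcup_k obox (al k) (be' k).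
  move=> x [Xx Hx]; have [k _ xk] := cov x Xx; exists k => //.
  apply: obox_setc => //; have /andP[h1 h2] := xk i.
  by rewrite h1 lt_min h2 Hx.
have c2 : X `&` ~` [set x | (x i 0 < a)%R] `<=` \bigcup_k obox (al' k) (be k).
  move=> x [Xx Hx]; have [k _ xk] := cov x Xx; exists k => //.
  apply: obox_setcl => //; have /andP[h1 h2] := xk i.
  rewrite h2 andbT gt_max h1 /=.
  have : ~ (x i 0 < a)%R by [].
  move/negP; rewrite -leNgt => h; have := d0 k; lra.
apply: (le_trans (leeD (leb_lb c1) (leb_lb c2))).
rewrite -nneseriesD; last 2 first.
  by move=> k _ _; rewrite lee_fin obox_vol_ge0.
  by move=> k _ _; rewrite lee_fin obox_vol_ge0.
apply: (@le_trans _ _ (\sum_(k <oo) ((obox_vol (al k) (be k))%:E +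
     ((e / 2) / (2 ^ k.+1)%:R)%R%:E))).
  apply: lee_nneseries.
    by move=> k _ _; rewrite adde_ge0 // lee_fin obox_vol_ge0.
  move=> k _; rewrite -!EFinD lee_fin.
  rewrite (vol_split _ _ i) (vol_split (al' k) _ i) (vol_split (al k) _ i).
  rewrite wvol_setcl wvol_setcr !setcE -/(w k) -mulrDl.
  have hm := max_split (al k i 0)%R (be k i 0)%R a (d0 k).
  apply: (le_trans (ler_wpM2r (w0 k) hm)).
  rewrite mulrDl lerD2l /d.
  set c := ((e / 2) / (2 ^ k.+1)%:R)%R.
  have c0 : (0 < c)%R by rewrite /c divr_gt0.
  rewrite mulrAC ler_pdivrMr; last by rewrite ltr_wpDl.
  by rewrite mulrDr mulr1 lerDl; exact: ltW.
apply: (le_trans (epsilon_trick _ _ _)).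
  by move=> k; rewrite lee_fin obox_vol_ge0.
  by apply: ltW.
apply: (le_trans (leeD2r _ hs)).
rewrite -addeA -EFinD; apply: leeD2l; rewrite lee_fin; lra.
Qed.

End Half.


Section Meas.
Variables (R : realType) (n : nat).
Hypothesis n0 : (0 < n)%N.
Local Notation V := 'cV[R]_n.
Local Notation leb := (@leb_outer R n).

HB.instance Definition _ := isOuterMeasure.Build R V leb (@leb0 R n n0)
  (@leb_ge0 R n) (@leb_le R n) (@leb_sigma_subadditive R n).

Local Notation M := (@leb_measurable R n).

Lemma MC E : M E -> M (~` E).
Proof. exact: (@caratheodory_measurable_setC R V leb). Qed.

Lemma MI E F : M E -> M F -> M (E `&` F).
Proof. exact: (@caratheodory_measurable_setI R V leb). Qed.

Lemma MU E F : M E -> M F -> M (E `|` F).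
Proof. exact: (@caratheodory_measurable_setU R V leb). Qed.

Lemma Mbigcup (F : nat -> set V) : (forall k, M (F k)) -> M (\bigcup_k F k).
Proof. exact: (@caratheodory_measurable_bigcup R V leb). Qed.

Lemma M0 : M set0.
Proof. exact: (@caratheodory_measurable_set0 R V leb). Qed.

Lemma MT : M setT.
Proof. by rewrite -setC0; apply: MC; exact: M0. Qed.

Lemma Mbigcap (F : nat -> set V) : (forall k, M (F k)) -> M (\bigcap_k F k).
Proof.
move=> h; rewrite -(setCK (\bigcap_k F k)) setC_bigcap.
by apply: MC; apply: Mbigcup => k; apply: MC.
Qed.

Lemma Mlt i a : M [set x : V | x i 0 < a].
Proof. by apply: (@le_caratheodory_measurable R V leb) => X; exact: half_carath. Qed.

Lemma Mgt i a : M [set x : V | a < x i 0].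
Proof.
have -> : [set x : V | a < x i 0] =
    \bigcup_k ~` [set x : V | x i 0 < a + k.+1%:R^-1].
  apply/seteqP; split => x /=.
    move=> /ltr_add_invr[k hk].
    by exists k => //=; apply/negP; rewrite -leNgt; apply: ltW.
  move=> [k _] /= /negP; rewrite -leNgt => h.
  by apply: lt_le_trans h; rewrite ltrDl invr_gt0.
by apply: Mbigcup => k; apply: MC; exact: Mlt.
Qed.


Lemma Mforall (P : 'I_n -> set V) : (forall i, M (P i)) ->
  M [set x | forall i, P i x].
Proof.
move=> h.
have -> : [set x | forall i, P i x] =
    \bigcap_k (if insub k is Some i then P i else setT).
  apply/seteqP; split => x /=.
    by move=> hx k _; case: insubP => // i.
  move=> hx i; have := hx (val i) I; by rewrite valK.
apply: Mbigcap => k; case: insubP => [i _ _|_]; [exact: h | exact: MT].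
Qed.

Lemma Mobox (a b : V) : M (obox a b).
Proof.
have -> : obox a b = [set x | forall i,
    ([set x : V | a i 0 < x i 0] `&` [set x : V | x i 0 < b i 0]) x].
  apply/seteqP; split => x /= h i; first by have /andP[] := h i.
  by have [] := h i => -> ->.
by apply: Mforall => i; apply: MI; [exact: Mgt | exact: Mlt].
Qed.

Definition lopen (U : set V) := forall y, U y -> exists2 d : R, 0 < d &
  forall z : V, (forall j, `|z j 0 - y j 0| < d) -> U z.

Lemma lopen_meas U : lopen U -> M U.
Proof.
move=> hU.
pose E (k : nat) : set V := if unpickle k is Some p then
   (let a := map_mx (@ratr R) (p : 'cV[rat]_n * 'cV[rat]_n).1 in
    let b := map_mx (@ratr R) p.2 in
    if `[< obox a b `<=` U >] then obox a b else set0) else set0.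
have -> : U = \bigcup_k E k.
  apply/seteqP; split => [y Uy|y [k _]]; last first.
    rewrite /E; case: (unpickle k) => // p /=.
    by case: asboolP => // h /h.
  have [d d0 hd] := hU y Uy.
  have q1 : forall j : 'I_n, exists q : rat, ratr q \in `]y j 0 - d, y j 0[.
    by move=> j; apply: rat_in_itvoo; rewrite ltrBlDr ltrDl.
  have q2 : forall j : 'I_n, exists q : rat, ratr q \in `]y j 0, y j 0 + d[.
    by move=> j; apply: rat_in_itvoo; rewrite ltrDl.
  have [f1 hf1] := choice q1; have [f2 hf2] := choice q2.
  pose a : 'cV[rat]_n := \col_j f1 j; pose b : 'cV[rat]_n := \col_j f2 j.
  exists (pickle (a, b)) => //; rewrite /E pickleK /=.
  have hab : forall j : 'I_n, map_mx (@ratr R) a j 0 = ratr (f1 j) /\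
                              map_mx (@ratr R) b j 0 = ratr (f2 j).
    by move=> j; rewrite !mxE.
  case: asboolP => [_|]; last first.
    case=> z hz; apply: hd => j; have := hz j; have [-> ->] := hab j.
    have := hf1 j; have := hf2 j; rewrite !in_itv /= => /andP[h1 h2] /andP[h3 h4].
    move=> /andP[h5 h6]; rewrite ltr_norml; apply/andP; split; lra.
  move=> j; have [-> ->] := hab j.
  have := hf1 j; have := hf2 j; rewrite !in_itv /= => /andP[h1 h2] /andP[h3 h4].
  by rewrite h4 h1.
apply: Mbigcup => k; rewrite /E; case: (unpickle k) => [p|]; last exact: M0.
by case: asboolP => _; [exact: Mobox | exact: M0].
Qed.

End Meas.


Section Mx.
Variables (R : realType) (n : nat).
Local Notation V := 'cV[R]_n.

Lemma dil_unit (A : 'M[R]_n) : is_dilation A -> A \in unitmx.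
Proof.
move=> hA; rewrite unitmxE unitfE; apply/eqP => d0.
have : 1 < `|0 : R[i]|.
  apply: hA; rewrite /root -(rmorph0 (real_complex R)) horner_map.
  by rewrite horner_coef0 char_poly_det d0 mulr0 rmorph0.
by rewrite normr0 ltr10.
Qed.

Lemma mpow_unit (A : 'M[R]_n) k : A \in unitmx -> mpow A k \in unitmx.
Proof.
move=> hA; case: k => m /=.
  by elim: m => [|m ih] /=; rewrite ?unitmx1 // unitmx_mul hA.
elim: m => [|m ih] /=; first by rewrite mulmx1 unitmx_inv.
by rewrite unitmx_mul unitmx_inv hA.
Qed.

Definition mxS (Q : 'M[R]_n) : R := \sum_i \sum_j `|Q i j|.

Lemma mxS_ge0 Q : 0 <= mxS Q.
Proof. by apply: sumr_ge0 => i _; apply: sumr_ge0. Qed.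

Lemma mx_bound (Q : 'M[R]_n) (v : V) (d : R) : 0 <= d ->
  (forall j, `|v j 0| <= d) -> forall i, `|(Q *m v) i 0| <= mxS Q * d.
Proof.
move=> d0 hv i; rewrite mxE.
apply: (le_trans (ler_norm_sum _ _ _)).
apply: (@le_trans _ _ (\sum_j `|Q i j| * d)).
  by apply: ler_sum => j _; rewrite normrM ler_wpM2l.
rewrite -mulr_suml ler_wpM2r // /mxS [X in _ <= X](bigD1 i) //= lerDl.
by apply: sumr_ge0 => k _; apply: sumr_ge0.
Qed.

Definition qball (Q : 'M[R]_n) (x : V) : set V :=
  [set z | \sum_i ((Q *m (z - x)) i 0) ^+ 2 < 1].

Lemma sq_step (u h e : R) : `|h| <= e -> e <= 1 ->
  (u + h) ^+ 2 <= u ^+ 2 + e * (2 * `|u| + 1).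
Proof.
move=> he e1.
have h1 : u * h <= `|u| * e.
  apply: (le_trans (ler_norm _)); rewrite normrM ler_wpM2l //.
have h2 : h ^+ 2 <= e.
  rewrite -(real_normK (num_real h)).
  have : 0 <= `|h| by [].
  nra.
nra.
Qed.


Lemma qball_lopen Q x : lopen (qball Q x).
Proof.
move=> y; rewrite /qball /= => hy.
set u := Q *m (y - x) in hy *.
set q := \sum_i (u i 0) ^+ 2 in hy.
have q0 : 0 <= q by apply: sumr_ge0 => i _; exact: sqr_ge0.
pose C := \sum_i (2 * `|u i 0| + 1).
have C0 : 0 <= C by apply: sumr_ge0 => i _; apply: addr_ge0 => //; apply: mulr_ge0.
pose g := 1 - q.
have g0 : 0 < g by rewrite /g subr_gt0.
pose e := g / (C + 1) / 2.
have C1 : 0 < C + 1 by lra.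
have e0 : 0 < e by rewrite /e !divr_gt0.
have e1 : e <= 1.
  have g1 : g <= 1 by rewrite /g; lra.
  rewrite /e ler_pdivrMr // ler_pdivrMr // mul1r.
  lra.
have eC : e * C < g.
  rewrite /e mulrAC -mulrA.
  have h1 : C / (C + 1) < 1 by rewrite ltr_pdivrMr // mul1r; lra.
  have h2 : 0 <= C / (C + 1) by rewrite divr_ge0 //; lra.
  have : g / 2 * (C / (C + 1)) <= g / 2 by rewrite ler_piMr ?divr_ge0 //; [lra|lra].
  lra.
pose S := mxS Q + 1.
have S0 : 0 < S by rewrite /S; have := mxS_ge0 Q; lra.
exists (e / S); first by rewrite divr_gt0.
move=> z hz.
have hzx : Q *m (z - x) = u + Q *m (z - y).
  rewrite /u -mulmxDr; congr (_ *m _).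
  by rewrite [RHS]addrC addrA subrK.
rewrite hzx.
have hh : forall i, `|(Q *m (z - y)) i 0| <= e.
  move=> i.
  have hb := @mx_bound Q (z - y) (e / S).
  apply: le_trans (hb _ _ i) _.
  - by rewrite divr_ge0 // ltW.
  - by move=> j; rewrite !mxE ltW.
  rewrite mulrCA ger_pMr // ler_pdivrMr // mul1r /S; lra.
apply: (@le_lt_trans _ _ (\sum_i ((u i 0) ^+ 2 + e * (2 * `|u i 0| + 1)))).
  by apply: ler_sum => i _; rewrite mxE; apply: sq_step.
rewrite big_split /= -mulr_sumr -/q -/C.
move: eC; rewrite /g; lra.
Qed.


Local Notation leb := (@leb_outer R n).

Lemma aball_qball (A P : 'M[R]_n) (x : V) k : A \in unitmx ->
  aball A [set w | \sum_(i < n) ((P *m w) i 0) ^+ 2 < 1] x k =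
  qball (P *m invmx (mpow A k)) x.
Proof.
move=> hA; have hM := mpow_unit k hA; set M := mpow A k in hM *.
apply/seteqP; split => z.
  case=> _ [w Dw <-] <-; rewrite /qball /=.
  rewrite [x + _]addrC addrK -mulmxA (mulmxA (invmx M)) mulVmx // mul1mx.
  exact: Dw.
rewrite /qball /= => hz.
exists (M *m (invmx M *m (z - x))); last by rewrite mulmxA mulmxV // mul1mx addrC subrK.
by exists (invmx M *m (z - x)) => //=; rewrite mulmxA.
Qed.

Local Open Scope ereal_scope.

Lemma leb_transl (x : V) (S : set V) : leb S <= leb [set (x + y)%R | y in S].
Proof.
apply: le_ereal_inf_tmp => _ [a [b [cov ->]]].
apply: (le_trans (leb_lb (a := fun k => (a k - x)%R) (b := fun k => (b k - x)%R) _)).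
  move=> y Sy; have [k _ hk] := cov (x + y)%R (ex_intro2 _ _ y Sy erefl).
  exists k => // i; have /andP[h1 h2] := hk i; rewrite !mxE in h1 h2 *.
  by apply/andP; split; lra.
apply: lee_nneseries => [k _ _|k _]; first by rewrite lee_fin obox_vol_ge0.
rewrite lee_fin (_ : obox_vol (a k - x) (b k - x) = obox_vol (a k) (b k)) //.
by apply: eq_bigr => i _; rewrite !mxE opprB addrA subrK.
Qed.

Lemma leb_scale (t : R) (S : set V) : (0 < t)%R ->
  (t ^+ n)%:E * leb S <= leb (scale_set t S).
Proof.
move=> t0; apply: le_ereal_inf_tmp => _ [a [b [cov ->]]].
have t10 : (0 < t^-1)%R by rewrite invr_gt0.
have h := leb_lb (a := fun k => t^-1 *: a k) (b := fun k => t^-1 *: b k) (E := S).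
have : leb S <= \sum_(k <oo) (obox_vol (t^-1 *: a k) (t^-1 *: b k))%:E.
  apply: h => y Sy; have [k _ hk] := cov (t *: y) (ex_intro2 _ _ y Sy erefl).
  exists k => // i; have /andP[h1 h2] := hk i; rewrite !mxE in h1 h2 *.
  rewrite (mulrC t^-1 (a k i 0))%R (mulrC t^-1 (b k i 0))%R ltr_pdivrMr // ltr_pdivlMr //.
  by rewrite !(mulrC (y i 0) t)%R h1 h2.
have -> : \sum_(k <oo) (obox_vol (t^-1 *: a k)%R (t^-1 *: b k)%R)%:E =
    \sum_(k <oo) ((t^-1 ^+ n)%R%:E * (obox_vol (a k) (b k))%:E).
  apply: eq_eseriesr => k _; rewrite -EFinM; congr EFin.
  rewrite /obox_vol (_ : t^-1 ^+ n = \prod_(i < n) t^-1)%R; last first.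
    by rewrite prodr_const card_ord.
  rewrite -big_split /=.
  apply: eq_bigr => i _; rewrite !mxE -mulrBr maxr_pMr ?ltW // mulr0 //.
rewrite nneseriesZl; last by move=> k _; rewrite lee_fin obox_vol_ge0.
move=> hle.
have := lee_wpmul2l (x := (t ^+ n)%:E) _ hle.
rewrite muleA -EFinM -exprMn mulfV ?gt_eqF // expr1n mul1e.
by apply; rewrite lee_fin exprn_ge0 // ltW.
Qed.

End Mx.


Section Pos.
Variables (R : realType) (n : nat).
Local Notation V := 'cV[R]_n.
Local Notation leb := (@leb_outer R n).

Definition Dset (P : 'M[R]_n) : set V :=
  [set w | \sum_(i < n) ((P *m w) i 0) ^+ 2 < 1].

Lemma coord_le1 (y : V) : \sum_(i < n) (y i 0) ^+ 2 < 1 -> forall j, `|y j 0| <= 1.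
Proof.
move=> hy j.
have h : (y j 0) ^+ 2 <= 1.
  apply: le_trans (ltW hy); rewrite (bigD1 j) //= lerDl.
  by apply: sumr_ge0 => i _; exact: sqr_ge0.
rewrite -(real_normK (num_real (y j 0))) in h.
have : 0 <= `|y j 0| by [].
nra.
Qed.

Lemma scale_sub (P M : 'M[R]_n) : P \in unitmx -> M \in unitmx ->
  exists2 t : R, 0 < t & scale_set t (Dset P) `<=` lin_image M (Dset P).
Proof.
move=> hP hM.
pose G := P *m invmx M *m invmx P.
pose S := mxS G + 1.
have S0 : 0 < S by rewrite /S; have := mxS_ge0 G; lra.
pose t := (n%:R * S ^+ 2 + 1)^-1.
have nS0 : 0 <= n%:R * S ^+ 2 by apply: mulr_ge0 => //; exact: sqr_ge0.
have t0 : 0 < t by rewrite /t invr_gt0; lra.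
have t1 : t <= 1 by rewrite /t invf_le1; lra.
have tn : n%:R * t * S ^+ 2 < 1.
  rewrite mulrAC /t -/(_ / _) ltr_pdivrMr; lra.
exists t => // _ [w Dw <-].
exists (t *: (invmx M *m w)); last first.
  by rewrite -scalemxAr mulmxA mulmxV // mul1mx.
rewrite /Dset /= -scalemxAr.
have hG : G *m (P *m w) = P *m (invmx M *m w).
  by rewrite /G -!mulmxA (mulmxA (invmx P)) mulVmx // mul1mx.
rewrite -hG.
have hy := coord_le1 Dw.
apply: (@le_lt_trans _ _ (\sum_(i < n) t * S ^+ 2)); last first.
  by rewrite sumr_const card_ord -mulr_natl mulrA.
apply: ler_sum => i _; rewrite mxE exprMn.
have hb := @mx_bound _ _ G (P *m w) 1 ler01 hy i.
rewrite mulr1 in hb.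
have hb2 : `|(G *m (P *m w)) i 0| <= S by rewrite /S; lra.
rewrite -(real_normK (num_real ((G *m (P *m w)) i 0))).
set a := `|(G *m (P *m w)) i 0| in hb2 *.
have a0 : 0 <= a by rewrite /a normr_ge0.
have ha : a ^+ 2 <= S ^+ 2 by nra.
have t2 : t ^+ 2 <= t by rewrite expr2 ger_pMr //.
apply: (le_trans (ler_wpM2l (sqr_ge0 t) ha)).
by rewrite ler_wpM2r // sqr_ge0.
Qed.

Local Open Scope ereal_scope.

Lemma aball_pos (A P : 'M[R]_n) (x : V) k : A \in unitmx -> P \in unitmx ->
  leb (Dset P) = 1 -> 0 < leb (aball A (Dset P) x k).
Proof.
move=> hA hP h1.
have [t t0 ht] := scale_sub hP (mpow_unit k hA).
apply: (@lt_le_trans _ _ ((t ^+ n)%:E * leb (Dset P))).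
  by rewrite h1 mule1 lte_fin exprn_gt0.
apply: (le_trans (leb_scale _ t0)).
apply: (le_trans (leb_le ht)).
exact: leb_transl.
Qed.

End Pos.


Lemma powR_mono (R : realType) (r x z : R) : 0 < r -> 0 <= x -> 0 <= z ->
  (x `^ r < z `^ r) = (x < z).
Proof.
move=> r0 x0 z0; apply/idP/idP; last first.
  by apply: gt0_ltr_powR; rewrite ?nnegrE.
apply: contraTT; rewrite -!leNgt => zx.
by apply: ge0_ler_powR; rewrite ?nnegrE // ltW.
Qed.

Lemma powR_lt_iff (R : realType) (r x y : R) : 0 < r -> 0 <= x -> 0 <= y ->
  (x `^ r < y) = (x < y `^ r^-1).
Proof.
move=> r0 x0 y0.
rewrite -(powR_mono r0 x0 (powR_ge0 _ _)) -powRrM mulVf ?gt_eqF // powRr1 //.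
Qed.

Section Fun.
Variables (R : realType) (n : nat).
Hypothesis n0 : (0 < n)%N.
Local Notation V := 'cV[R]_n.
Local Notation M := (@leb_measurable R n).

Definition rmeas (f : V -> R) := forall a : R, M [set x | f x < a].

Lemma Mconst (P : Prop) : M [set _ : V | P].
Proof.
case: (pselect P) => hP.
  have -> : [set _ : V | P] = setT by apply/seteqP; split.
  exact: (MT n0).
have -> : [set _ : V | P] = set0 by apply/seteqP; split.
exact: (M0 n0).
Qed.

Lemma rmeas_cst c : rmeas (fun=> c).
Proof. by move=> a; exact: Mconst. Qed.

Lemma rmeas_ind (B : set V) c : M B -> rmeas (fun x => c * \1_B x).
Proof.
move=> mB a.
have -> : [set x | c * \1_B x < a] =
    (B `&` [set _ | c < a]) `|` (~` B `&` [set _ | 0 < a]).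
  apply/seteqP; split => x /=.
    by case: (pselect (B x)) => hB; rewrite indicE;
      [rewrite mem_set // mulr1; left | rewrite memNset // mulr0; right].
  by case=> -[hB h]; rewrite indicE; [rewrite mem_set // mulr1 | rewrite memNset // mulr0].
apply: (MU n0); apply: (MI n0) => //; try exact: Mconst.
exact: (MC n0).
Qed.

Lemma rmeas_add f g : rmeas f -> rmeas g -> rmeas (fun x => f x + g x).
Proof.
move=> hf hg a.
have -> : [set x | f x + g x < a] = \bigcup_k
    (if unpickle k is Some q then [set x | f x < ratr q] `&` [set x | g x < a - ratr q]
     else set0).
  apply/seteqP; split => x /=.
    move=> h; have [q hq] : exists q : rat, ratr q \in `]f x, a - g x[.
      by apply: rat_in_itvoo; rewrite ltrBrDr.
    exists (pickle q); first by [].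
    rewrite pickleK; move: hq; rewrite in_itv /=.
    move=> /andP[h1 h2]; split; first exact: h1.
    change (g x < a - ratr q); lra.
  move=> [k _]; case: (unpickle k) => // q [h1 h2].
  have h1' : f x < ratr q := h1.
  have h2' : g x < a - ratr q := h2.
  lra.
apply: (Mbigcup n0) => // k; case: (unpickle k) => [q|]; last exact: (M0 n0).
by apply: (MI n0); [apply: hf | apply: hg].
Qed.

Lemma rmeas_sum (I : nat -> V -> R) m : (forall i, rmeas (I i)) ->
  rmeas (fun x => \sum_(i < m) I i x).
Proof.
move=> hI; elim: m => [|m ih].
  by under [fun x => _]funext do rewrite big_ord0; exact: rmeas_cst.
under [fun x => _]funext do rewrite big_ord_recr /=.
exact: rmeas_add.
Qed.

Lemma rmeas_pow f r : 0 < r -> (forall x, 0 <= f x) -> rmeas f ->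
  rmeas (fun x => f x `^ r).
Proof.
move=> r0 f0 hf a.
case: (ltP 0 a) => a0.
  have -> : [set x | f x `^ r < a] = [set x | f x < a `^ r^-1].
    by apply/seteqP; split => x /=; rewrite powR_lt_iff // ltW.
  exact: hf.
have -> : [set x | f x `^ r < a] = set0.
  apply/seteqP; split => x //= h; have := powR_ge0 (f x) r; lra.
exact: (M0 n0).
Qed.

Lemma rmeas_le f u : rmeas f -> M [set x | f x <= u].
Proof.
move=> hf.
have -> : [set x | f x <= u] = \bigcap_k [set x | f x < u + k.+1%:R^-1].
  apply/seteqP; split => x /=.
    by move=> h k _; apply: le_lt_trans h _; rewrite ltrDl invr_gt0.
  move=> h; rewrite leNgt; apply/negP => /ltr_add_invr[k hk].
  have h' : f x < u + k.+1%:R^-1 := h k I.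
  by have := lt_trans hk h'; rewrite ltxx.
by apply: (Mbigcap n0) => k; apply: hf.
Qed.

Lemma eser_le (u : nat -> \bar R) x : (forall i, (0 <= u i)%E) ->
  (forall m, (\sum_(i < m) u i <= x)%E) -> (\sum_(i <oo) u i <= x)%E.
Proof.
move=> u0 h; apply: lime_le; first exact: is_cvg_nneseries.
near=> m; have := h m; by rewrite big_mkord.
Unshelve. all: by end_near. Qed.

Lemma eser_ge (u : nat -> \bar R) m : (forall i, (0 <= u i)%E) ->
  (\sum_(i < m) u i <= \sum_(i <oo) u i)%E.
Proof.
move=> u0; have := @nneseries_lim_ge R u xpredT 0 m (fun k _ _ => u0 k).
by rewrite big_mkord.
Qed.

Lemma emeas_series (h : nat -> V -> R) r : 0 < r ->
  (forall i, rmeas (h i)) -> (forall i x, 0 <= h i x) ->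
  leb_meas_fun (fun x => ((\sum_(i <oo) (h i x)%:E) `^ r)%E).
Proof.
move=> r0 hm h0 a.
have S0 x : (0 <= \sum_(i <oo) (h i x)%:E)%E.
  by apply: nneseries_ge0 => i _ _; rewrite lee_fin.
case: (ltP 0 a) => a0; last first.
  have -> : [set x | ((\sum_(i <oo) (h i x)%:E) `^ r < a%:E)%E] = set0.
    apply/seteqP; split => x //= hx.
    have := poweR_ge0 (\sum_(i <oo) (h i x)%:E) r.
    by rewrite leNgt (lt_le_trans hx) // lee_fin.
  exact: (M0 n0).
pose b := a `^ r^-1.
have b0 : 0 < b by rewrite /b powR_gt0.
have hx0 x i : (0 <= (h i x)%:E)%E by rewrite lee_fin.
have -> : [set x | ((\sum_(i <oo) (h i x)%:E) `^ r < a%:E)%E] =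
    \bigcup_k \bigcap_m [set x | \sum_(i < m) h i x <= b - k.+1%:R^-1].
  apply/seteqP; split => x /=.
    move: (S0 x) (fun m => eser_ge m (hx0 x)).
    case E : (\sum_(i <oo) (h i x)%:E)%E => [s| |] //= s0 hge.
      rewrite lte_fin powR_lt_iff // ?ltW // -/b => sb.
      have [k hk] := ltr_add_invr sb.
      exists k => // m _ /=.
      have := hge m; rewrite sumEFin lee_fin => hm2.
      by apply: le_trans hm2 _; rewrite lerBrDr; exact: ltW.
    by rewrite gt_eqF // ltNge leey.
  move=> [k _ hk].
  have hle : (\sum_(i <oo) (h i x)%:E <= (b - k.+1%:R^-1)%:E)%E.
    apply: eser_le => // m; rewrite sumEFin lee_fin; exact: (hk m I).
  move: hle (S0 x); case E : (\sum_(i <oo) (h i x)%:E)%E => [s| |] //=.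
  rewrite lee_fin ?poweR_EFin lte_fin => hs s0.
  rewrite powR_lt_iff // ?ltW // -/b.
  by apply: le_lt_trans hs _; rewrite ltrBlDr ltrDl invr_gt0.
apply: (Mbigcup n0) => k; apply: (Mbigcap n0) => m.
by apply: rmeas_le; apply: rmeas_sum.
Qed.

End Fun.


Section Main.
Variables (R : realType) (n : nat) (A P : 'M[R]_n)
  (N : ('cV[R]_n -> \bar R) -> \bar R) (s : R)
  (mu : set ('cV[R]_n * int) -> \bar R).
Hypotheses (n0 : (0 < n)%N) (hA : A \in unitmx) (hP : P \in unitmx)
  (hD1 : leb_outer (Dset P) = 1%E) (hX : ball_qBfs A (Dset P) N) (s0 : 0 < s).
Local Notation V := 'cV[R]_n.
Local Notation leb := (@leb_outer R n).
Local Notation M := (@leb_measurable R n).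
Local Notation D := (Dset P).

Definition bl (c : nat -> V) (k : nat -> int) (j : nat) : set V := aball A D (c j) (k j).
Definition nB c k j : R := fine (N (indE (bl c k j))).
Definition coef c k (lam : nat -> R) j : R := (lam j / nB c k j) `^ s.
Definition term c k (lam : nat -> R) (j : nat) : \bar R :=
  ((lam j / nB c k j)%:E * (leb (bl c k j) `^ 2^-1)
    * (mu (tent A D (bl c k j)) `^ 2^-1))%E.
Definition Ffin (m : nat) c k lam : V -> \bar R :=
  fun x => ((\sum_(i < m) coef c k lam i * \1_(bl c k i) x) `^ s^-1)%:E.
Definition Finf c k lam : V -> \bar R :=
  fun x => ((\sum_(i <oo) (coef c k lam i * \1_(bl c k i) x)%:E) `^ s^-1)%E.

Lemma cnE : carleson_norm A D N s mu =
  ereal_sup [set v : \bar R | exists (m : nat) (c : nat -> V) (k : nat -> int)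
      (lam : nat -> R),
      [/\ forall j, 0 <= lam j,
          \sum_(j < m) lam j != 0
        & v = ((\sum_(j < m) term c k lam j)
               * ((fine (N (Ffin m c k lam)))^-1)%:E)%E]].
Proof. by []. Qed.

Lemma cntE : carleson_norm_tilde A D N s mu =
  ereal_sup [set v : \bar R | exists (c : nat -> V) (k : nat -> int)
      (lam : nat -> R),
      [/\ forall j, 0 <= lam j,
          (0 < N (Finf c k lam) < +oo)%E
        & v = ((\sum_(j <oo) term c k lam j)
               * ((fine (N (Finf c k lam)))^-1)%:E)%E]].
Proof. by []. Qed.

Lemma bl_meas c k j : M (bl c k j).
Proof.
rewrite /bl aball_qball //; apply: (lopen_meas n0); exact: qball_lopen.
Qed.

Lemma bl_pos c k j : (0 < leb (bl c k j))%E.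
Proof. exact: aball_pos. Qed.

Lemma lae_all (Q : V -> Prop) : (forall x, Q x) -> lae Q.
Proof.
move=> h; rewrite /lae (_ : [set x | ~ Q x] = set0) ?leb0 //.
by apply/seteqP; split => x //=.
Qed.

Lemma nn_EFin (g : V -> R) : rmeas g -> (forall x, 0 <= g x) ->
  nnmeas (fun x => (g x)%:E).
Proof.
move=> hg g0; split; last by move=> x; rewrite lee_fin.
move=> a; have -> : [set x | ((g x)%:E < a%:E)%E] = [set x | g x < a].
  by apply/seteqP; split => x /=; rewrite lte_fin.
exact: hg.
Qed.

Lemma ind_nn (B : set V) : M B -> nnmeas (indE B).
Proof.
move=> mB; rewrite /indE.
have -> : (fun x => (\1_B x : R)%:E) = (fun x => (1 * (\1_B x : R))%:E).
  by apply: boolp.funext => x; rewrite mul1r.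
by apply: nn_EFin; [exact: (rmeas_ind n0) | move=> x; rewrite mul1r].
Qed.

Lemma N_ind c k j : (0 < N (indE (bl c k j)) < +oo)%E.
Proof.
case: hX => Nge0 _ _ N0 [_ _ Nfin].
rewrite Nfin andbT lt_neqAle Nge0 ?andbT; last exact/ind_nn/bl_meas.
apply/eqP => /esym h0.
have := N0 _ (ind_nn (bl_meas c k j)) h0; rewrite /lae => hz.
have : (leb (bl c k j) <= 0)%E.
  rewrite -hz; apply: leb_le => x hx /=.
  by rewrite /indE indicE mem_set //= => /eqP; rewrite eqe oner_eq0.
by rewrite leNgt bl_pos.
Qed.

Lemma nB_gt0 c k j : 0 < nB c k j.
Proof. exact: fine_gt0 (N_ind c k j). Qed.

Lemma coef_ge0 c k lam j : 0 <= coef c k lam j.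
Proof. exact: powR_ge0. Qed.

Lemma term_ge0 c k lam j : 0 <= lam j -> (0 <= term c k lam j)%E.
Proof.
move=> l0; rewrite /term; apply: mule_ge0; last exact: poweR_ge0.
apply: mule_ge0; last exact: poweR_ge0.
by rewrite lee_fin divr_ge0 // ltW // nB_gt0.
Qed.

Lemma term0 c k lam j : lam j = 0 -> term c k lam j = 0%E.
Proof. by move=> l0; rewrite /term l0 mul0r !mul0e. Qed.

Lemma coef0 c k lam j : lam j = 0 -> coef c k lam j = 0.
Proof. by move=> l0; rewrite /coef l0 mul0r powR0 // gt_eqF. Qed.

Lemma coef_gt0 c k lam j : 0 < lam j -> 0 < coef c k lam j.
Proof. by move=> l0; apply: powR_gt0; rewrite divr_gt0 // nB_gt0. Qed.

Lemma Ffin_nn m c k lam : nnmeas (Ffin m c k lam).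
Proof.
apply: nn_EFin; last by move=> x; exact: powR_ge0.
apply: (rmeas_pow n0); first by rewrite invr_gt0.
  by move=> x; apply: sumr_ge0 => i _; apply: mulr_ge0 => //; exact: coef_ge0.
apply: (rmeas_sum n0 (I := fun i x => coef c k lam i * \1_(bl c k i) x)) => i.
by apply: (rmeas_ind n0); exact: bl_meas.
Qed.

Lemma Finf_nn c k lam : nnmeas (Finf c k lam).
Proof.
split; last by move=> x; exact: poweR_ge0.
apply: (emeas_series n0 (h := fun i x => coef c k lam i * \1_(bl c k i) x)).
- by rewrite invr_gt0.
- move=> i; apply: (rmeas_ind n0) => //; exact: bl_meas.
- by move=> i x; apply: mulr_ge0 => //; exact: coef_ge0.
Qed.


Lemma rmeas_ind1 (B : set V) : M B -> rmeas (fun x => (\1_B x : R)).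
Proof.
move=> mB; have := (rmeas_ind n0) B 1 mB.
by rewrite (_ : (fun x => 1 * (\1_B x : R)) = (fun x => (\1_B x : R))) //;
  apply: boolp.funext => x; rewrite mul1r.
Qed.

Lemma Nmono f g : nnmeas f -> nnmeas g -> (forall x, (g x <= f x)%E) ->
  (N g <= N f)%E.
Proof.
case: hX => _ _ _ _ [Nm _ _] hf hg hle.
by apply: Nm => //; apply: lae_all.
Qed.

Lemma Nge0 f : nnmeas f -> (0 <= N f)%E.
Proof. by case: hX => h _ _ _ _; apply: h. Qed.

Lemma ser_nn c k lam x i : (0 <= (coef c k lam i * \1_(bl c k i) x)%:E)%E.
Proof. by rewrite lee_fin mulr_ge0 // coef_ge0. Qed.

Lemma Ffin_le_Finf m c k lam x : (Ffin m c k lam x <= Finf c k lam x)%E.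
Proof.
rewrite /Ffin /Finf.
have := eser_ge m (ser_nn c k lam x); rewrite sumEFin.
have S0 : (0 <= \sum_(i <oo) (coef c k lam i * \1_(bl c k i) x)%:E)%E.
  by apply: nneseries_ge0 => i _ _; exact: ser_nn.
move: S0; case: (\sum_(i <oo) (coef c k lam i * \1_(bl c k i) x)%:E)%E => [t| |] //=.
- rewrite !lee_fin => t0 h; apply: ge0_ler_powR.
  + by rewrite invr_ge0 ltW.
  + by rewrite nnegrE; apply: sumr_ge0 => i _; rewrite mulr_ge0 // coef_ge0.
  + by rewrite nnegrE.
  + exact: h.
- by move=> _ _; rewrite gt_eqF ?invr_gt0 // leey.
Qed.

Lemma Ffin_pos m c k lam j : (j < m)%N -> 0 < lam j ->
  (0 < N (Ffin m c k lam))%E.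
Proof.
move=> jm lj; case: hX => _ _ _ N0 _.
rewrite lt_neqAle Nge0 ?andbT; last exact: Ffin_nn.
apply/eqP => /esym h0.
have hz := N0 _ (Ffin_nn m c k lam) h0.
have : (leb (bl c k j) <= 0)%E.
  rewrite -hz; apply: leb_le => x hx /=.
  rewrite /Ffin => /eqP; rewrite eqe powR_eq0 => /andP[/eqP hs _].
  have hnn : forall i : 'I_m, true -> 0 <= coef c k lam i * \1_(bl c k i) x.
    by move=> i _; rewrite mulr_ge0 // coef_ge0.
  have := @psumr_eq0P R _ xpredT _ hnn hs (Ordinal jm) isT.
  rewrite /= indicE mem_set // mulr1 => /eqP.
  by rewrite gt_eqF // coef_gt0.
by rewrite leNgt bl_pos.
Qed.


Definition Gm (m : nat) c k : V -> \bar R :=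
  fun x => (\sum_(i < m) (\1_(bl c k i) x : R))%:E.

Lemma Gm_nn m c k : nnmeas (Gm m c k).
Proof.
apply: nn_EFin; last by move=> x; apply: sumr_ge0.
apply: (rmeas_sum n0 (I := fun i x => (\1_(bl c k i) x : R))) => i.
exact/rmeas_ind1/bl_meas.
Qed.

Lemma Gm_fin m c k : (N (Gm m c k) < +oo)%E.
Proof.
case: hX => _ Nhom [K [K1 Ktri]] _ _.
elim: m => [|m ih].
  have -> : Gm 0 c k = (fun x => (0%:E * indE (bl c k 0%N) x)%E).
    by apply: boolp.funext => x; rewrite /Gm big_ord0 mul0e.
  by rewrite Nhom // ?mul0e ?ltry //; exact/ind_nn/bl_meas.
have -> : Gm m.+1 c k = (fun x => (Gm m c k x + indE (bl c k m) x)%E).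
  by apply: boolp.funext => x; rewrite /Gm big_ord_recr /= EFinD.
apply: (le_lt_trans (Ktri _ _ (Gm_nn m c k) (ind_nn (bl_meas c k m)))).
apply: lte_mul_pinfty => //; first by rewrite lee_fin; lra.
by rewrite lte_add_pinfty //; case/andP: (N_ind c k m).
Qed.

Lemma Ffin_fin m c k lam : (N (Ffin m c k lam) < +oo)%E.
Proof.
case: hX => _ Nhom _ _ _.
pose C := (\sum_(i < m) coef c k lam i) `^ s^-1.
have C0 : 0 <= C by exact: powR_ge0.
have hCG : nnmeas (fun x => (C%:E * Gm m c k x)%E).
  have -> : (fun x => (C%:E * Gm m c k x)%E) =
      (fun x => (\sum_(i < m) C * (\1_(bl c k i) x : R))%:E).
    by apply: boolp.funext => x; rewrite /Gm -EFinM mulr_sumr.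
  apply: nn_EFin; last by move=> x; apply: sumr_ge0 => i _; apply: mulr_ge0.
  apply: (rmeas_sum n0 (I := fun i x => C * (\1_(bl c k i) x : R))) => i.
  by apply: (rmeas_ind n0); exact: bl_meas.
apply: (@le_lt_trans _ _ (N (fun x => (C%:E * Gm m c k x)%E))).
  apply: Nmono => //; first exact: Ffin_nn.
  move=> x; rewrite /Ffin /Gm -EFinM lee_fin.
  have hs1 : 0 < s^-1 by rewrite invr_gt0.
  case: (pselect (exists i : 'I_m, bl c k i x)) => [[i hi]|hn].
    have g1 : 1 <= \sum_(i < m) (\1_(bl c k i) x : R).
      rewrite (bigD1 i) //= indicE mem_set // lerDl.
      by apply: sumr_ge0.
    have hC : (\sum_(i < m) coef c k lam i * (\1_(bl c k i) x : R)) `^ s^-1 <= C.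
      rewrite /C; apply: ge0_ler_powR; first exact: ltW.
      - by rewrite nnegrE; apply: sumr_ge0 => j _; rewrite mulr_ge0 // coef_ge0.
      - by rewrite nnegrE; apply: sumr_ge0 => j _; rewrite coef_ge0.
      - apply: ler_sum => j _; rewrite indicE.
        by case: (_ \in _); rewrite ?mulr1 ?mulr0 ?coef_ge0.
    by apply: le_trans hC _; rewrite ler_peMr.
  rewrite big1 ?powR0 ?gt_eqF //; first by apply: mulr_ge0 => //; apply: sumr_ge0.
  move=> j _; rewrite indicE memNset ?mulr0 // => hj.
  by apply: hn; exists j.
rewrite Nhom //; last exact: Gm_nn.
by apply: lte_mul_pinfty; [rewrite lee_fin | by [] | exact: Gm_fin].
Qed.


Lemma ser_trunc (u : nat -> \bar R) m : (forall i, (0 <= u i)%E) ->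
  (forall i, (m <= i)%N -> u i = 0%E) -> (\sum_(i <oo) u i = \sum_(i < m) u i)%E.
Proof.
move=> u0 uz; rewrite (nneseries_split 0 m) //.
by rewrite add0n eseries0 ?adde0 ?big_mkord // => i hi _; exact: uz.
Qed.

Definition lamp (m : nat) (lam : nat -> R) j := if (j < m)%N then lam j else 0.

Lemma lamp_ge0 m lam j : (forall j, 0 <= lam j) -> 0 <= lamp m lam j.
Proof. by move=> l0; rewrite /lamp; case: ifP. Qed.

Lemma Finf_pad m c k lam : Finf c k (lamp m lam) = Ffin m c k lam.
Proof.
apply: boolp.funext => x; rewrite /Finf /Ffin (ser_trunc (m:=m)).
- rewrite sumEFin poweR_EFin; congr (_ `^ _)%:E.
  by apply: eq_bigr => i _; rewrite /coef /lamp ltn_ord.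
- by move=> i; exact: ser_nn.
- by move=> i hi; rewrite coef0 ?mul0r // /lamp ltnNge hi.
Qed.

Lemma term_pad m c k lam : (forall j, 0 <= lam j) ->
  (\sum_(j <oo) term c k (lamp m lam) j = \sum_(j < m) term c k lam j)%E.
Proof.
move=> l0; rewrite (ser_trunc (m:=m)).
- by apply: eq_bigr => i _; rewrite /term /lamp ltn_ord.
- by move=> i; apply: term_ge0; exact: lamp_ge0.
- by move=> i hi; rewrite term0 // /lamp ltnNge hi.
Qed.

Lemma main_eq : carleson_norm_tilde A D N s mu = carleson_norm A D N s mu.
Proof.
rewrite cnE cntE.
set F := [set v | exists m c k lam, _].
have Fge0 : (0 <= ereal_sup F)%E.
  pose c : nat -> V := fun=> 0; pose k : nat -> int := fun=> 0%R.
  pose l1 : nat -> R := fun=> 1.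
  apply: (le_trans _ (ereal_sup_ubound (x := ((\sum_(j < 1) term c k l1 j)
     * ((fine (N (Ffin 1 c k l1)))^-1)%:E)%E) _)).
    apply: mule_ge0; first by apply: sume_ge0 => j _; apply: term_ge0; rewrite /l1.
    by rewrite lee_fin invr_ge0; apply: fine_ge0; apply: Nge0; exact: Ffin_nn.
  exists 1%N, c, k, l1; split.
  - by move=> j; rewrite /l1.
  - by rewrite big_ord1 /l1 oner_eq0.
  - by [].
apply/eqP; rewrite eq_le; apply/andP; split.
  apply: ge_ereal_sup => _ [c [k [lam [l0 /andP[Np Nf] ->]]]].
  set y := fine (N (Finf c k lam)).
  have y0 : 0 < y by apply: fine_gt0; rewrite Np Nf.
  rewrite muleC -nneseriesZl; last by move=> j _; exact: term_ge0.
  apply: eser_le => [j|m].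
    by apply: mule_ge0; [rewrite lee_fin invr_ge0 ltW | exact: term_ge0].
  case: (pselect (exists j : 'I_m, 0 < lam j)) => [[j hj]|hn]; last first.
    rewrite big1 // => j _; rewrite term0 ?mule0 //.
    have := l0 j; rewrite le_eqVlt => /orP[/eqP <-//|hj].
    by exfalso; apply: hn; exists j.
  have hsum : \sum_(j < m) lam j != 0.
    rewrite gt_eqF // (bigD1 j) //=; apply: ltr_pwDl => //.
    by apply: sumr_ge0.
  have hle := Nmono (Finf_nn c k lam) (Ffin_nn m c k lam) (Ffin_le_Finf m c k lam).
  have Fp := Ffin_pos c k (ltn_ord j) hj.
  have Ff : (N (Ffin m c k lam) < +oo)%E by apply: le_lt_trans hle Nf.
  set z := fine (N (Ffin m c k lam)).
  have z0 : 0 < z by apply: fine_gt0; rewrite Fp Ff.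
  have zy : z <= y.
    apply: fine_le => //; rewrite ge0_fin_numE ?Ff ?Nf //; exact: ltW.
  apply: (le_trans _ (ereal_sup_ubound (x := ((\sum_(j < m) term c k lam j)
     * ((fine (N (Ffin m c k lam)))^-1)%:E)%E) _)); last first.
    by exists m, c, k, lam.
  rewrite -ge0_sume_distrr; last by move=> i _; exact: term_ge0.
  rewrite muleC; apply: lee_wpmul2l.
    by apply: sume_ge0 => i _; exact: term_ge0.
  by rewrite lee_fin lef_pV2 ?posrE.
apply: ereal_sup_le => _ [m [c [k [lam [l0 hs ->]]]]].
have [j hj] : exists j : 'I_m, 0 < lam j.
  apply: contra_notP (negP hs) => hn; apply/eqP; apply: big1 => j _.
  have := l0 j; rewrite le_eqVlt => /orP[/eqP <-//|hj].
  by exfalso; apply: hn; exists j.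
exists c, k, (lamp m lam); split.
- by move=> i; exact: lamp_ge0.
- by rewrite Finf_pad (Ffin_pos c k (ltn_ord j) hj) Ffin_fin.
- by rewrite Finf_pad term_pad.
Qed.

End Main.

Unset Implicit Arguments.
Set Strict Implicit.
Set Printing Implicit Defensive.

Theorem proposition6p2 (R : realType) (n : nat) (A : 'M[R]_n)
  (D : set 'cV[R]_n) (r : R) (N : ('cV[R]_n -> \bar R) -> \bar R) (s : R)
  (mu : set ('cV[R]_n * int) -> \bar R) :
  (0 < n)%N ->
  is_dilation A ->
  centered_ellipsoid D -> leb_outer D = 1%E ->
  1 < r -> D `<=` scale_set r D -> scale_set r D `<=` lin_image A D ->
  ball_qBfs A D N ->
  0 < s ->
  borel_measure mu ->
  carleson_norm_tilde A D N s mu = carleson_norm A D N s mu.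
Proof.
move=> n0 hdil [P [hP hD]] hD1 _ _ _ hX s0 _.
subst D.
exact: (@main_eq R n A P N s mu n0 (dil_unit hdil) hP hD1 hX s0).
Qed.
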